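(* For every closed and guarded expression $\phi\in\mathcal{E}_0$ there exist a finite $T$-coalgebra $D=(Z,\theta)$ and a state $z\in Z$ such that for every $T$-coalgebra $C=(X,\xi)$, $[\![\phi]\!]_C$ is precisely the set of states of $C$ that are behaviourally equivalent to $z$.
   Context: Standing assumptions: $T:\mathbf{Set}\to\mathbf{Set}$ is a functor; $\mathcal{L}$ is a set of modalities with arities ($L/n$), each $L/n$ assigned an $n$-ary monotone singleton-preserving predicate lifting $[\![L]\!]$ for $T$ such that $\Lambda=\{[\![L]\!]\mid L\in\mathcal{L}\}$ is strongly expressive. (An $n$-ary predicate lifting is a family $\lambda_X:(\mathcal{P}X)^n\to\mathcal{P}(TX)$ with $\lambda_X(f^{-1}[A_1],\dots,f^{-1}[A_n])=(Tf)^{-1}[\lambda_Y(A_1,\dots,A_n)]$ for $f:X\to Y$; monotone if monotone in each argument; singleton-preserving if $|\lambda_X(\{x_1\},\dots,\{x_n\})|=1$ for all $x_i\in X$; $\Lambda$ strongly expressive if for every set $X$ and $t\in TX$ there are $\lambda/n\in\Lambda$, $x_i\in X$ with $\{t\}=\lambda_X(\{x_1\},\dots,\{x_n\})$.) Fix a set $V$ of variables. Expressions $\mathcal{E}$: $\phi::=z\mid\nu z.\,\phi\mid L(\phi_1,\dots,\phi_n)$. Closed: every variable occurrence bound by a $\nu$. Guarded: every variable occurrence is separated from its binding $\nu$ by at least one modality. $\mathcal{E}_0$ is the set of closed guarded expressions. Semantics in a coalgebra $C=(X,\xi)$ under valuation $\kappa:V\to\mathcal{P}X$: $[\![z]\!]^\kappa=\kappa(z)$;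 $[\![L(\phi_1,\dots,\phi_n)]\!]^\kappa=\xi^{-1}[[\![L]\!]_X([\![\phi_1]\!]^\kappa,\dots,[\![\phi_n]\!]^\kappa)]$; $[\![\nu z.\phi]\!]^\kappa=$ greatest fixed point of $Y\mapsto[\![\phi]\!]^{\kappa[z\mapsto Y]}$; for closed $\phi$ write $[\![\phi]\!]_C$. States of coalgebras are behaviourally equivalent if some coalgebra morphisms (maps $h$ with $Th\circ\xi=\zeta\circ h$) into a common coalgebra identify them. *)

(* Defs.v *)
From Stdlib Require Import List FinFun Classical ClassicalEpsilon.
From Stdlib Require Vectors.Fin.

Record Functor := {
  fobj :> Type -> Type;
  fmap : forall (X Y : Type), (X -> Y) -> fobj X -> fobj Y;
  fmap_id : forall (X : Type) (t : fobj X), fmap X X (fun x => x) t = t;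
  fmap_comp : forall (X Y W : Type) (f : X -> Y) (g : Y -> W) (t : fobj X),
      fmap X W (fun x => g (f x)) t = fmap Y W g (fmap X Y f t)
}.

Arguments fmap {_ _ _} _ _.

(* n-ary predicate liftings: subsets are predicates X -> Prop,
   an n-tuple of subsets is a map Fin.t n -> (X -> Prop). *)
Definition pred_lifting_fam (T : Functor) (n : nat) : Type :=
  forall X : Type, (Fin.t n -> X -> Prop) -> T X -> Prop.

Definition is_natural (T : Functor) (n : nat) (lam : pred_lifting_fam T n) : Prop :=
  forall (X Y : Type) (f : X -> Y) (A : Fin.t n -> Y -> Prop) (t : T X),
    lam X (fun i x => A i (f x)) t <-> lam Y A (fmap f t).

Definition is_monotone (T : Functor) (n : nat) (lam : pred_lifting_fam T n) : Prop :=
  forall (X : Type) (A B : Fin.t n -> X -> Prop),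
    (forall i x, A i x -> B i x) -> forall t, lam X A t -> lam X B t.

Definition singleton_preserving (T : Functor) (n : nat) (lam : pred_lifting_fam T n) : Prop :=
  forall (X : Type) (xs : Fin.t n -> X),
    exists t : T X, forall t', lam X (fun i y => y = xs i) t' <-> t' = t.

Definition strongly_expressive (T : Functor) (Lmod : Type) (ar : Lmod -> nat)
  (lift : forall l : Lmod, pred_lifting_fam T (ar l)) : Prop :=
  forall (X : Type) (t : T X), exists (l : Lmod) (xs : Fin.t (ar l) -> X),
    forall t', lift l X (fun i y => y = xs i) t' <-> t' = t.

Inductive expr (Lmod : Type) (ar : Lmod -> nat) (V : Type) : Type :=
| EVar : V -> expr Lmod ar V
| ENu : V -> expr Lmod ar V -> expr Lmod ar V
| EMod : forall l : Lmod, (Fin.t (ar l) -> expr Lmod ar V) -> expr Lmod ar V.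

Arguments EVar {_ _ _} _.
Arguments ENu {_ _ _} _ _.
Arguments EMod {_ _ _} _ _.

Fixpoint closed_in {Lmod ar V} (B : V -> Prop) (phi : expr Lmod ar V) : Prop :=
  match phi with
  | EVar z => B z
  | ENu z psi => closed_in (fun w => w = z \/ B w) psi
  | EMod l args => forall i, closed_in B (args i)
  end.

Definition closed {Lmod ar V} (phi : expr Lmod ar V) : Prop :=
  closed_in (fun _ => False) phi.

(* guarded_in U phi : U is the set of variables bound by a nu that is not
   separated from the current position by a modality; an occurrence of z is
   unguarded iff its binding nu lies after the last modality, i.e. z in U. *)
Fixpoint guarded_in {Lmod ar V} (U : V -> Prop) (phi : expr Lmod ar V) : Prop :=
  match phi with
  | EVar z => ~ U z
  | ENu z psi => guarded_in (fun w => w = z \/ U w) psi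
  | EMod l args => forall i, guarded_in (fun _ => False) (args i)
  end.

Definition guarded {Lmod ar V} (phi : expr Lmod ar V) : Prop :=
  guarded_in (fun _ => False) phi.

Definition upd {V X : Type} (kappa : V -> X -> Prop) (z : V) (Y : X -> Prop)
  : V -> X -> Prop :=
  fun w => if excluded_middle_informative (w = z) then Y else kappa w.

Definition gfp {X : Type} (F : (X -> Prop) -> (X -> Prop)) : X -> Prop :=
  fun x => exists Y : X -> Prop, (forall y, Y y -> F Y y) /\ Y x.

Fixpoint sem (T : Functor) {Lmod : Type} {ar : Lmod -> nat}
  (lift : forall l : Lmod, pred_lifting_fam T (ar l)) {V X : Type}
  (xi : X -> T X) (kappa : V -> X -> Prop) (phi : expr Lmod ar V) : X -> Prop :=
  match phi with
  | EVar z => kappa z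
  | EMod l args =>
      fun x => lift l X (fun i => sem T lift xi kappa (args i)) (xi x)
  | ENu z psi => gfp (fun Y => sem T lift xi (upd kappa z Y) psi)
  end.

(* semantics of a closed expression: valuation irrelevant, use the empty one *)
Definition sem_closed (T : Functor) {Lmod : Type} {ar : Lmod -> nat}
  (lift : forall l : Lmod, pred_lifting_fam T (ar l)) {V X : Type}
  (xi : X -> T X) (phi : expr Lmod ar V) : X -> Prop :=
  sem T lift xi (fun _ _ => False) phi.

Definition coalg_morphism (T : Functor) {X Y : Type}
  (xi : X -> T X) (zeta : Y -> T Y) (h : X -> Y) : Prop :=
  forall x, fmap h (xi x) = zeta (h x).

Definition beh_equiv (T : Functor) {X Z : Type}
  (xi : X -> T X) (theta : Z -> T Z) (x : X) (z : Z) : Prop :=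
  exists (W : Type) (omega : W -> T W) (h : X -> W) (g : Z -> W),
    coalg_morphism T xi omega h /\ coalg_morphism T theta omega g /\ h x = g z.

(* Main.v *)
Require Import Defs.
From Stdlib Require Import List FinFun.
From Stdlib Require Vectors.Fin.
From Stdlib Require Import Classical ClassicalEpsilon FunctionalExtensionality PropExtensionality ProofIrrelevance.
From Stdlib Require Import Relations Relation_Operators.

Fixpoint pos {Lmod : Type} {ar : Lmod -> nat} {V : Type} (psi : expr Lmod ar V) : Type :=
  match psi with
  | EVar _ => Empty_set
  | ENu _ p => pos p
  | EMod l args => (unit + {i : Fin.t (ar l) & pos (args i)})%type
  end.

Definition updZ {V A : Type} (e : V -> A) (z : V) (a : A) : V -> A :=
  fun w => if excluded_middle_informative (w = z) then a else e w.

Fixpoint rep {Lmod : Type} {ar : Lmod -> nat} {V Z : Type} (psi : expr Lmod ar V)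
  : (pos psi -> Z) -> (V -> Z) -> Z :=
  match psi as p0 return (pos p0 -> Z) -> (V -> Z) -> Z with
  | EVar v => fun emb eps => eps v
  | ENu z p => fun emb eps => rep p emb eps
  | EMod l args => fun emb eps => emb (inl tt)
  end.

Fixpoint info {Lmod : Type} {ar : Lmod -> nat} {V Z : Type} (psi : expr Lmod ar V)
  : (pos psi -> Z) -> (V -> Z) -> pos psi -> {l : Lmod & Fin.t (ar l) -> Z} :=
  match psi as p0 return (pos p0 -> Z) -> (V -> Z) -> pos p0 -> {l : Lmod & Fin.t (ar l) -> Z} with
  | EVar v => fun emb eps q => match q with end
  | ENu z p => fun emb eps => info p emb (updZ eps z (rep p emb eps))
  | EMod l args => fun emb eps q =>
      match q with
      | inl _ => existT _ l (fun i => rep (args i) (fun q' => emb (inr (existT _ i q'))) eps)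
      | inr (existT _ i q') => info (args i) (fun q'' => emb (inr (existT _ i q''))) eps q'
      end
  end.

Fixpoint canon (T : Functor) {Lmod : Type} {ar : Lmod -> nat}
  (lift : forall l : Lmod, pred_lifting_fam T (ar l)) {V X : Type}
  (xi : X -> T X) (psi : expr Lmod ar V) : (V -> X -> Prop) -> pos psi -> X -> Prop :=
  match psi as p0 return (V -> X -> Prop) -> pos p0 -> X -> Prop with
  | EVar v => fun k q => match q with end
  | ENu z p => fun k => canon T lift xi p (upd k z (sem T lift xi k (ENu z p)))
  | EMod l args => fun k q =>
      match q with
      | inl _ => sem T lift xi k (EMod l args)
      | inr (existT _ i q') => canon T lift xi (args i) k q'
      end
  end.

Definition FF (T : Functor) {Lmod : Type} {ar : Lmod -> nat}
  (lift : forall l : Lmod, pred_lifting_fam T (ar l)) {X Z : Type}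
  (ni : Z -> {l : Lmod & Fin.t (ar l) -> Z}) (xi : X -> T X)
  (H : X -> Z -> Prop) (x : X) (p : Z) : Prop :=
  lift (projT1 (ni p)) X (fun i y => H y (projT2 (ni p) i)) (xi x).

Lemma fact2 (T : Functor) (Lmod : Type) (ar : Lmod -> nat)
  (lift : forall l : Lmod, pred_lifting_fam T (ar l))
  (Hnat : forall l, is_natural T (ar l) (lift l))
  (Hmono : forall l, is_monotone T (ar l) (lift l))
  (Z : Type) (theta : Z -> T Z) (ni : Z -> {l : Lmod & Fin.t (ar l) -> Z})
  (Hth : forall p, lift (projT1 (ni p)) Z (fun i y => y = projT2 (ni p) i) (theta p))
  (X : Type) (xi : X -> T X) :
  forall x p, beh_equiv T xi theta x p ->
    FF T lift ni xi (fun y p' => beh_equiv T xi theta y p') x p.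
Proof.
  intros x p [W [om [h [g [mh [mg hg]]]]]].
  unfold FF. specialize (Hth p). revert Hth.
  destruct (ni p) as [l r]; simpl; intro Hth.
  assert (H1 : lift l Z (fun i y => (fun i w => w = g (r i)) i (g y)) (theta p)).
  { eapply Hmono; [|exact Hth]. simpl. intros i y ->. reflexivity. }
  apply (Hnat l) in H1. rewrite mg, <- hg, <- mh in H1.
  apply (Hnat l) in H1.
  eapply Hmono; [|exact H1]. simpl. intros i y E.
  exists W, om, h, g. auto.
Qed.

Lemma sig_eq_pi {A : Type} (P : A -> Prop) (a b : sig P) :
  proj1_sig a = proj1_sig b -> a = b.
Proof.
  destruct a as [a pa], b as [b pb]; simpl; intros ->.
  f_equal. apply proof_irrelevance.
Qed.

Lemma fact1 (T : Functor) (Lmod : Type) (ar : Lmod -> nat)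
  (lift : forall l : Lmod, pred_lifting_fam T (ar l))
  (Hnat : forall l, is_natural T (ar l) (lift l))
  (Hmono : forall l, is_monotone T (ar l) (lift l))
  (Hsing : forall l, singleton_preserving T (ar l) (lift l))
  (Z : Type) (theta : Z -> T Z) (ni : Z -> {l : Lmod & Fin.t (ar l) -> Z})
  (Hth : forall p, lift (projT1 (ni p)) Z (fun i y => y = projT2 (ni p) i) (theta p))
  (X : Type) (xi : X -> T X) (H : X -> Z -> Prop)
  (Hpost : forall x p, H x p -> FF T lift ni xi H x p) :
  forall x p, H x p -> beh_equiv T xi theta x p.
Proof.
  set (base := fun a b : X + Z => match a, b with inl x, inr p => H x p | _, _ => False end).
  set (E := clos_refl_sym_trans _ base).
  set (W := {P : X + Z -> Prop | exists w, P = E w}).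
  set (q := fun w : X + Z => (exist _ (E w) (ex_intro _ w eq_refl) : W)).
  assert (qeq : forall a b, E a b -> q a = q b).
  { intros a b Eab. apply sig_eq_pi. simpl.
    apply functional_extensionality; intro c. apply propositional_extensionality.
    split; intro Hc.
    - eapply rst_trans; [apply rst_sym; exact Eab| exact Hc].
    - eapply rst_trans; [exact Eab | exact Hc]. }
  set (xi' := fun w : X + Z => match w with
                               | inl x => fmap inl (xi x)
                               | inr p => fmap inr (theta p) end : T (sum X Z)).
  assert (K : forall a b, E a b -> fmap q (xi' a) = fmap q (xi' b)).
  { intros a b Eab. induction Eab as [a b Hb| a | a b _ IH | a b c _ IH1 _ IH2].
    - destruct a as [x|p0]; [|destruct Hb]. destruct b as [x'|p]; [destruct Hb|].
      simpl in Hb. simpl.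
      rewrite <- !fmap_comp.
      pose proof (Hpost _ _ Hb) as Hp. unfold FF in Hp.
      pose proof (Hth p) as Ht. revert Hp Ht.
      destruct (ni p) as [l r]; simpl; intros Hp Ht.
      destruct (Hsing l W (fun i => q (inr (r i)))) as [t Ht'].
      transitivity t; [|symmetry]; apply Ht'; apply (Hnat l); eapply Hmono.
      2: exact Hp. 3: exact Ht.
      + simpl. intros i y Hy. apply qeq. apply rst_step. exact Hy.
      + simpl. intros i y ->. reflexivity.
    - reflexivity.
    - symmetry; exact IH.
    - congruence. }
  set (om := fun s : W => fmap q (xi' (proj1_sig (constructive_indefinite_description _ (proj2_sig s))))).
  assert (Hom : forall w, om (q w) = fmap q (xi' w)).
  { intro w. unfold om. destruct (constructive_indefinite_description _ _) as [w0 Hw0].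
    simpl. simpl in Hw0. apply K.
    assert (E w0 w0) by apply rst_refl. rewrite <- Hw0 in H0. apply rst_sym. exact H0. }
  intros x p Hxp.
  exists W, om, (fun x => q (inl x)), (fun p => q (inr p)).
  split; [|split].
  - intro y. rewrite Hom. simpl. apply fmap_comp.
  - intro y. rewrite Hom. simpl. apply fmap_comp.
  - apply qeq, rst_step. exact Hxp.
Qed.

Lemma pos_finite {Lmod : Type} {ar : Lmod -> nat} {V : Type} (psi : expr Lmod ar V) :
  Finite (pos psi).
Proof.
  induction psi as [v | z p IH | l args IH].
  - exists nil. intros [].
  - exact IH.
  - set (f := fun i => proj1_sig (constructive_indefinite_description _ (IH i))).
    assert (Hf : forall i, Full (f i)).
    { intro i. unfold f. destruct (constructive_indefinite_description _ _). assumption. }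
    destruct (Fin_Finite (ar l)) as [li Hli].
    exists (inl tt :: map inr (flat_map (fun i => map (existT _ i) (f i)) li)).
    intros [[]|[i q]]; [left; reflexivity|right].
    apply in_map. apply in_flat_map. exists i. split; [apply Hli|].
    apply in_map. apply Hf.
Qed.

Lemma pos_inh {Lmod : Type} {ar : Lmod -> nat} {V : Type} (psi : expr Lmod ar V) :
  forall (Bd U : V -> Prop), closed_in Bd psi -> guarded_in U psi ->
  (forall v, Bd v -> U v) -> inhabited (pos psi).
Proof.
  induction psi as [v | z p IH | l args IH]; simpl; intros Bd U Hc Hg HBU.
  - exfalso. apply Hg, HBU, Hc.
  - apply (IH _ _ Hc Hg). intros v [->|Hv]; auto.
  - constructor. exact (inl tt).
Qed.

Lemma rep_indep {Lmod : Type} {ar : Lmod -> nat} {V Z : Type} (psi : expr Lmod ar V) :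
  forall (U : V -> Prop) (emb : pos psi -> Z) (e e' : V -> Z),
  guarded_in U psi -> (forall v, ~ U v -> e v = e' v) -> rep psi emb e = rep psi emb e'.
Proof.
  induction psi as [v | z p IH | l args IH]; simpl; intros U emb e e' Hg He.
  - apply He, Hg.
  - apply (IH _ emb e e' Hg). intros v Hv. apply He. intro; apply Hv; auto.
  - reflexivity.
Qed.

Lemma sem_mono (T : Functor) (Lmod : Type) (ar : Lmod -> nat)
  (lift : forall l : Lmod, pred_lifting_fam T (ar l))
  (Hmono : forall l, is_monotone T (ar l) (lift l))
  (V X : Type) (xi : X -> T X) (psi : expr Lmod ar V) :
  forall k k' : V -> X -> Prop, (forall v x, k v x -> k' v x) ->
  forall x, sem T lift xi k psi x -> sem T lift xi k' psi x.
Proof.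
  induction psi as [v | z p IH | l args IH]; simpl; intros k k' Hk x Hx.
  - auto.
  - destruct Hx as [Y [HY Yx]]. exists Y. split; [|exact Yx].
    intros y Hy. eapply IH; [|apply HY, Hy].
    intros v w. unfold upd. destruct (excluded_middle_informative (v = z)); auto.
  - eapply Hmono; [|exact Hx]. intros i y. apply IH; auto.
Qed.

Lemma FF_eq (T : Functor) (Lmod : Type) (ar : Lmod -> nat)
  (lift : forall l : Lmod, pred_lifting_fam T (ar l))
  (Z X : Type) (ni : Z -> {l : Lmod & Fin.t (ar l) -> Z})
  (xi : X -> T X) (H : X -> Z -> Prop) x p l r :
  ni p = existT _ l r ->
  (FF T lift ni xi H x p <-> lift l X (fun i y => H y (r i)) (xi x)).
Proof. unfold FF. intros ->. simpl. tauto. Qed.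

Lemma D1 (T : Functor) (Lmod : Type) (ar : Lmod -> nat)
  (lift : forall l : Lmod, pred_lifting_fam T (ar l))
  (Hmono : forall l, is_monotone T (ar l) (lift l))
  (V Z X : Type) (theta : Z -> T Z) (ni : Z -> {l : Lmod & Fin.t (ar l) -> Z})
  (xi : X -> T X)
  (Hpost : forall x p, beh_equiv T xi theta x p ->
    FF T lift ni xi (fun y p' => beh_equiv T xi theta y p') x p)
  (psi : expr Lmod ar V) :
  forall (emb : pos psi -> Z) e k (Bd U : V -> Prop),
  (forall q, ni (emb q) = info psi emb e q) ->
  closed_in Bd psi -> guarded_in U psi ->
  (forall v, Bd v -> forall x, beh_equiv T xi theta x (e v) -> k v x) ->
  forall x, beh_equiv T xi theta x (rep psi emb e) -> sem T lift xi k psi x.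
Proof.
  induction psi as [v | z p IH | l args IH]; simpl; intros emb e k Bd U Hco Hc Hg Hk x Hx.
  - apply Hk; assumption.
  - exists (fun y => beh_equiv T xi theta y (rep p emb e)). split; [|exact Hx].
    intros y Hy.
    apply (IH emb (updZ e z (rep p emb e)) (upd k z (fun y => beh_equiv T xi theta y (rep p emb e)))
             (fun w => w = z \/ Bd w) (fun w => w = z \/ U w)); auto.
    + intros v Hv w Hw. unfold upd. unfold updZ in Hw.
      destruct (excluded_middle_informative (v = z)); auto.
      destruct Hv as [Hv|Hv]; [contradiction|]. auto.
    + erewrite rep_indep; [exact Hy| exact Hg|].
      intros v Hv. unfold updZ. destruct (excluded_middle_informative (v = z)); auto.
      exfalso; apply Hv; auto.
  - apply Hpost in Hx. rewrite (FF_eq _ _ _ _ _ _ _ _ _ _ _ _ _ (Hco (inl tt))) in Hx.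
    eapply Hmono; [|exact Hx]. simpl. intros i y Hy.
    eapply IH; [| apply Hc | apply Hg | exact Hk | exact Hy].
    intro q. apply (Hco (inr (existT _ i q))).
Qed.

Lemma LA (T : Functor) (Lmod : Type) (ar : Lmod -> nat)
  (lift : forall l : Lmod, pred_lifting_fam T (ar l))
  (Hmono : forall l, is_monotone T (ar l) (lift l))
  (V Z X : Type) (xi : X -> T X) (S : Z -> X -> Prop)
  (psi : expr Lmod ar V) :
  forall (emb : pos psi -> Z) e k (Bd U : V -> Prop),
  (forall q, S (emb q) = canon T lift xi psi k q) ->
  closed_in Bd psi -> guarded_in U psi ->
  (forall v, Bd v -> ~ U v -> forall x, k v x -> S (e v) x) ->
  forall x, sem T lift xi k psi x -> S (rep psi emb e) x.
Proof.
  induction psi as [v | z p IH | l args IH]; simpl; intros emb e k Bd U Hco Hc Hg Hk x Hx.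
  - apply Hk; assumption.
  - apply (IH emb e (upd k z (sem T lift xi k (ENu z p))) (fun w => w = z \/ Bd w) (fun w => w = z \/ U w)); auto.
    + intros v Hv Hu w Hw. unfold upd in Hw.
      destruct (excluded_middle_informative (v = z)).
      * exfalso; apply Hu; auto.
      * destruct Hv as [Hv|Hv]; [contradiction|]. apply Hk; auto.
    + destruct Hx as [Y [HY Yx]]. eapply sem_mono; [exact Hmono| |apply HY, Yx].
      intros v w. unfold upd. destruct (excluded_middle_informative (v = z)); auto.
      intro Hw. exists Y. auto.
  - exact (eq_ind_r (fun P : X -> Prop => P x) Hx (Hco (inl tt))).
Qed.

Lemma LB (T : Functor) (Lmod : Type) (ar : Lmod -> nat)
  (lift : forall l : Lmod, pred_lifting_fam T (ar l))
  (Hmono : forall l, is_monotone T (ar l) (lift l))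
  (V Z X : Type) (ni : Z -> {l : Lmod & Fin.t (ar l) -> Z})
  (xi : X -> T X) (S : Z -> X -> Prop)
  (psi : expr Lmod ar V) :
  forall (emb : pos psi -> Z) e k (Bd U : V -> Prop),
  (forall q, ni (emb q) = info psi emb e q) ->
  (forall q, S (emb q) = canon T lift xi psi k q) ->
  closed_in Bd psi -> guarded_in U psi ->
  (forall v, Bd v -> forall x, k v x -> S (e v) x) ->
  forall q x, S (emb q) x -> FF T lift ni xi (fun y p => S p y) x (emb q).
Proof.
  induction psi as [v | z p IH | l args IH]; simpl; intros emb e k Bd U Hco HcoS Hc Hg Hk q x Hx.
  - destruct q.
  - apply (IH emb (updZ e z (rep p emb e)) (upd k z (sem T lift xi k (ENu z p)))
             (fun w => w = z \/ Bd w) (fun w => w = z \/ U w)); auto.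
    intros v Hv w Hw. unfold upd in Hw. unfold updZ.
    destruct (excluded_middle_informative (v = z)).
    + apply (LA T Lmod ar lift Hmono V Z X xi S (ENu z p) emb e k Bd U); auto.
    + destruct Hv as [Hv|Hv]; [contradiction|]. apply Hk; auto.
  - destruct q as [[]|[i q]].
    + pose proof (eq_ind _ (fun P : X -> Prop => P x) Hx _ (HcoS (inl tt))) as Hx'. simpl in Hx'. clear Hx. rewrite (FF_eq _ _ _ _ _ _ _ _ _ _ _ _ _ (Hco (inl tt))).
      eapply Hmono; [|exact Hx']. simpl. intros i y Hy.
      apply (LA T Lmod ar lift Hmono V Z X xi S (args i) _ e k Bd (fun _ => False)); auto.
      all: try (intro q; apply (HcoS (inr (existT _ i q)))).
    + apply (IH i (fun q' => emb (inr (existT _ i q'))) e k Bd (fun _ => False)); auto.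
      all: first [intro q'; apply (Hco (inr (existT _ i q'))) | intro q'; apply (HcoS (inr (existT _ i q')))].
Qed.

Theorem mainTheorem11
  (T : Functor) (Lmod : Type) (ar : Lmod -> nat)
  (lift : forall l : Lmod, pred_lifting_fam T (ar l))
  (Hnat : forall l, is_natural T (ar l) (lift l))
  (Hmono : forall l, is_monotone T (ar l) (lift l))
  (Hsing : forall l, singleton_preserving T (ar l) (lift l))
  (Hexpr : strongly_expressive T Lmod ar lift)
  (V : Type) (phi : expr Lmod ar V)
  (Hclosed : closed phi) (Hguarded : guarded phi) :
  exists (Z : Type) (theta : Z -> T Z) (z : Z),
    Finite Z /\
    forall (X : Type) (xi : X -> T X) (x : X),
      sem_closed T lift xi phi x <-> beh_equiv T xi theta x z.
Proof.
  destruct (pos_inh phi (fun _ => False) (fun _ => False) Hclosed Hguarded (fun _ h => h)) as [z0].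
  set (e0 := fun _ : V => z0).
  set (ni := info phi (fun q => q) e0).
  set (tsing := fun (l : Lmod) (xs : Fin.t (ar l) -> pos phi) =>
                  proj1_sig (constructive_indefinite_description _ (Hsing l (pos phi) xs))).
  assert (Htsing : forall l xs, lift l (pos phi) (fun i y => y = xs i) (tsing l xs)).
  { intros l xs. unfold tsing. destruct (constructive_indefinite_description _ _) as [t Ht].
    simpl. apply Ht. reflexivity. }
  set (theta := fun p => tsing (projT1 (ni p)) (projT2 (ni p))).
  assert (Hth : forall p, lift (projT1 (ni p)) (pos phi) (fun i y => y = projT2 (ni p) i) (theta p)).
  { intro p. apply Htsing. }
  exists (pos phi), theta, (rep phi (fun q => q) e0).
  split; [apply pos_finite|].
  intros X xi x. split.
  - intro Hx.
    set (S := canon T lift xi phi (fun _ _ => False)).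
    assert (HS : S (rep phi (fun q => q) e0) x).
    { apply (LA T Lmod ar lift Hmono V (pos phi) X xi S phi (fun q => q) e0 (fun _ _ => False)
               (fun _ => False) (fun _ => False)); auto.
      all: try (intros v []). }
    apply (fact1 T Lmod ar lift Hnat Hmono Hsing (pos phi) theta ni Hth X xi (fun y p => S p y)); auto.
    intros y p Hy.
    apply (LB T Lmod ar lift Hmono V (pos phi) X ni xi S phi (fun q => q) e0 (fun _ _ => False)
               (fun _ => False) (fun _ => False)); auto.
    all: try (intros v []).
  - intro Hx.
    apply (D1 T Lmod ar lift Hmono V (pos phi) X theta ni xi
             (fact2 T Lmod ar lift Hnat Hmono (pos phi) theta ni Hth X xi)
             phi (fun q => q) e0 (fun _ _ => False) (fun _ => False) (fun _ => False)); auto.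
    all: try (intros v []).
Qed.
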